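(* For all $n,k\in\mathbb{N}$ with $k\ge1$ and $n\ge k+2$, we have $\tau_{n,k}^2<\delta_{n,k}^2=A_{n,k}B_{n,k}$, where $$A_{n,k}\le\frac12\,\frac{(2k)!}{k^{2k}},\qquad B_{n,k}=\frac{n+k}{n}\,\frac{n^{2k}(n-k)!}{(n+k)!}.$$
   Context: $T_n$ denotes the Chebyshev polynomial of the first kind of degree $n$, $T_n(\cos\theta)=\cos n\theta$. For integers $n\ge k+2$, $k\ge 1$, let $\omega_{n,k}$ be the rightmost (largest) zero of $T_n^{(k+1)}$ and define $\tau_{n,k}:=|T_n^{(k)}(\omega_{n,k})|/T_n^{(k)}(1)$. Let $S_n(x):=\frac1n\sqrt{1-x^2}\,T_n'(x)$ and $D_{n,k}(x):=\big([T_n^{(k)}(x)]^2+[S_n^{(k)}(x)]^2\big)^{1/2}$ for $x\in(-1,1)$. With $x_k:=(1-k^2/n^2)^{1/2}$, set $\delta_{n,k}:=D_{n,k}(x_k)/T_n^{(k)}(1)$. Further, $A_{n,k}:=\frac{((2k-1)!!)^2}{k^{2k}}\sum_{m=0}^{k-1}\frac{c_{m,k}}{k^{2m}}\frac{n^{2m}}{(n^2-1^2)\cdots(n^2-m^2)}$ and $B_{n,k}:=\frac{n^{2k}}{n^2(n^2-1^2)\cdots(n^2-(k-1)^2)}$, where $c_{0,k}=1$, $c_{m,k}=\binom{k-1+m}{2m}((2m-1)!!)^2$ for $m\ge1$, and the empty product is $1$. *)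

(* Defs.v *)
From Stdlib Require Import Reals.
From Coquelicot Require Import Coquelicot.
Open Scope R_scope.

(* Chebyshev polynomial of the first kind, as a real function:
   T_0 = 1, T_1 = x, T_{n+2} = 2 x T_{n+1} - T_n  (so T_n(cos t) = cos(n t)). *)
Fixpoint cheb (n : nat) (x : R) : R :=
  match n with
  | O => 1
  | S O => x
  | S ((S m) as p) => 2 * x * cheb p x - cheb m x
  end.

Definition chebD (n k : nat) (x : R) : R := Derive_n (cheb n) k x.

Definition chebS (n : nat) (x : R) : R :=
  / INR n * sqrt (1 - x ^ 2) * Derive (cheb n) x.

Definition chebDD (n k : nat) (x : R) : R :=
  sqrt ((chebD n k x) ^ 2 + (Derive_n (chebS n) k x) ^ 2).

Definition xk (n k : nat) : R := sqrt (1 - (INR k) ^ 2 / (INR n) ^ 2).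

Definition delta (n k : nat) : R := chebDD n k (xk n k) / chebD n k 1.

Definition is_rightmost_zero (n k : nat) (w : R) : Prop :=
  chebD n (S k) w = 0 /\ (forall y, chebD n (S k) y = 0 -> y <= w).

Definition tau (n k : nat) (w : R) : R := Rabs (chebD n k w) / chebD n k 1.

(* sum_{i=0}^{m-1} f i  and  prod_{j=1}^{m} f j  (empty product = 1) *)
Fixpoint sumR (f : nat -> R) (m : nat) : R :=
  match m with O => 0 | S p => sumR f p + f p end.
Fixpoint prodR1 (f : nat -> R) (m : nat) : R :=
  match m with O => 1 | S p => prodR1 f p * f (S p) end.

(* (2m-1)!! = 1 * 3 * ... * (2m-1), with (-1)!! = 1 *)
Definition oddfact (m : nat) : R := prodR1 (fun i => 2 * INR i - 1) m.

Definition cmk (m k : nat) : R :=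
  match m with
  | O => 1
  | _ => Binomial.C (k - 1 + m) (2 * m) * (oddfact m) ^ 2
  end.

Definition Ank (n k : nat) : R :=
  (oddfact k) ^ 2 / (INR k) ^ (2 * k) *
  sumR (fun m => cmk m k / (INR k) ^ (2 * m) *
                 ((INR n) ^ (2 * m) /
                  prodR1 (fun j => (INR n) ^ 2 - (INR j) ^ 2) m)) k.

Definition Bnk (n k : nat) : R :=
  (INR n) ^ (2 * k) /
  ((INR n) ^ 2 * prodR1 (fun j => (INR n) ^ 2 - (INR j) ^ 2) (k - 1)).

(* Main.v *)
Require Import Defs.
From Stdlib Require Import Reals Lra Lia Psatz FunctionalExtensionality.
From Coquelicot Require Import Coquelicot.
Open Scope R_scope.


Lemma D_mult (f g : R -> R) (x a b : R) : is_derive f x a -> is_derive g x b ->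
  is_derive (fun t => f t * g t) x (a * g x + f x * b).
Proof. intros Ha Hb. apply (is_derive_mult f g x a b Ha Hb). intros; apply Rmult_comm. Qed.
Lemma D_plus (f g : R -> R) (x a b : R) : is_derive f x a -> is_derive g x b ->
  is_derive (fun t => f t + g t) x (a + b).
Proof. intros Ha Hb. apply (is_derive_plus f g x a b Ha Hb). Qed.
Lemma D_minus (f g : R -> R) (x a b : R) : is_derive f x a -> is_derive g x b ->
  is_derive (fun t => f t - g t) x (a - b).
Proof. intros Ha Hb. apply (is_derive_minus f g x a b Ha Hb). Qed.
Lemma D_scal (f : R -> R) (c x a : R) : is_derive f x a -> is_derive (fun t => c * f t) x (c * a).
Proof. intros Ha. apply (is_derive_scal f x c a Ha). Qed.
Lemma D_id (x : R) : is_derive (fun t => t) x 1.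
Proof. apply (is_derive_id x). Qed.
Lemma D_const (c x : R) : is_derive (fun _ => c) x 0.
Proof. apply (is_derive_const c x). Qed.
Lemma D_ext (f g : R -> R) (x a b : R) : (forall t, f t = g t) -> a = b -> is_derive f x a -> is_derive g x b.
Proof. intros H -> Hf. apply (is_derive_ext f g x b H Hf). Qed.


Fixpoint chebd (n k : nat) (x : R) : R :=
  match n with
  | O => match k with O => 1 | _ => 0 end
  | S O => match k with O => x | S O => 1 | _ => 0 end
  | S ((S m) as p) => 2 * x * chebd p k x
       + 2 * INR k * (match k with O => 0 | S k' => chebd p k' x end)
       - chebd m k x
  end.

Lemma chebd_SS m k x : chebd (S (S m)) k x = 2 * x * chebd (S m) k x
       + 2 * INR k * (match k with O => 0 | S k' => chebd (S m) k' x end)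
       - chebd m k x.
Proof. reflexivity. Qed.

Lemma pair_ind (P : nat -> Prop) : P O -> P 1%nat -> (forall m, P m -> P (S m) -> P (S (S m))) -> forall n, P n.
Proof.
  intros H0 H1 HS n. assert (P n /\ P (S n)) as [H _]; [|exact H].
  induction n as [|n [IH1 IH2]]; [split; auto|split; auto].
Qed.

Lemma chebd0 n x : chebd n 0 x = cheb n x.
Proof.
  induction n using pair_ind; [reflexivity|reflexivity|].
  rewrite chebd_SS. simpl (INR 0). change (cheb (S (S n)) x) with (2 * x * cheb (S n) x - cheb n x).
  rewrite IHn, IHn0. ring.
Qed.

Lemma chebd_der n k (x : R) : is_derive (chebd n k) x (chebd n (S k) x).
Proof.
  revert k. induction n using pair_ind; intro k.
  - destruct k; simpl; apply D_const.
  - destruct k as [|[|k]]; simpl; [apply D_id|apply D_const|apply D_const].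
  - destruct k as [|k].
    + eapply D_ext. { intro t. symmetry. apply chebd_SS. }
      2:{ apply D_minus; [apply D_plus|].
        - apply D_mult; [apply D_scal, D_id| apply IHn0].
        - apply D_const.
        - apply IHn. }
      rewrite chebd_SS. simpl. ring.
    + eapply D_ext. { intro t. symmetry. apply chebd_SS. }
      2:{ apply D_minus; [apply D_plus|].
        - apply D_mult; [apply D_scal, D_id| apply IHn0].
        - apply D_scal. apply IHn0.
        - apply IHn. }
      rewrite chebd_SS. rewrite !S_INR. ring.
Qed.

Lemma chebD_eq n k x : chebD n k x = chebd n k x.
Proof.
  unfold chebD. revert x. induction k; intro x.
  - simpl. symmetry. apply chebd0.
  - simpl. replace (Derive_n (cheb n) k) with (chebd n k).
    + apply is_derive_unique, chebd_der.
    + apply functional_extensionality; intro; symmetry; apply IHk.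
Qed.

Lemma chebd_high n k x : (n < k)%nat -> chebd n k x = 0.
Proof.
  revert k. induction n using pair_ind; intros k Hk.
  - destruct k; [lia|reflexivity].
  - destruct k as [|[|k]]; [lia|lia|reflexivity].
  - rewrite chebd_SS. destruct k; [lia|]. rewrite IHn0, IHn0, IHn by lia. ring.
Qed.

Lemma chebd_par n k x : chebd n k (-x) = (-1)^(n+k) * chebd n k x.
Proof.
  revert k. induction n using pair_ind; intro k.
  - destruct k; simpl; ring.
  - destruct k as [|[|k]]; simpl; ring.
  - rewrite !chebd_SS. destruct k.
    + rewrite IHn0, IHn. replace (S (S n) + 0)%nat with (S (S (n+0)))%nat by lia.
      replace (S n + 0)%nat with (S (n+0))%nat by lia. simpl. ring.
    + rewrite IHn0, IHn0, IHn.
      replace (S (S n) + S k)%nat with (S (S (n + S k)))%nat by lia.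
      replace (S n + S k)%nat with (S (n+ S k))%nat by lia.
      replace (S n + k)%nat with (n + S k)%nat by lia. simpl. ring.
Qed.


Lemma chebM n (x : R) : (1 - x^2) * chebd (S n) 1 x = INR (S n) * (chebd n 0 x - x * chebd (S n) 0 x).
Proof.
  induction n using pair_ind.
  - simpl. ring.
  - simpl. ring.
  - assert (E : (1 - x^2) * chebd (S (S (S n))) 1 x =
       2 * (1 - x^2) * chebd (S (S n)) 0 x + 2 * x * ((1 - x^2) * chebd (S (S n)) 1 x)
       - (1 - x^2) * chebd (S n) 1 x).
    { rewrite (chebd_SS (S n) 1). simpl INR. ring. }
    rewrite E, IHn0, IHn. rewrite (chebd_SS (S n) 0), (chebd_SS n 0). rewrite !S_INR. simpl INR. ring.
Qed.

Lemma chebL n (x : R) : (1 - x^2) * chebd n 2 x - x * chebd n 1 x + (INR n)^2 * chebd n 0 x = 0.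
Proof.
  induction n using pair_ind.
  - simpl. ring.
  - simpl. ring.
  - assert (E : (1 - x^2) * chebd (S (S n)) 2 x - x * chebd (S (S n)) 1 x + (INR (S (S n)))^2 * chebd (S (S n)) 0 x
      = 2 * x * ((1 - x^2) * chebd (S n) 2 x - x * chebd (S n) 1 x + (INR (S n))^2 * chebd (S n) 0 x)
        - ((1 - x^2) * chebd n 2 x - x * chebd n 1 x + (INR n)^2 * chebd n 0 x)
        + 4 * ((1 - x^2) * chebd (S n) 1 x + INR (S n) * x * chebd (S n) 0 x - INR (S n) * chebd n 0 x)).
    { rewrite !chebd_SS. rewrite !S_INR. simpl INR. ring. }
    rewrite E, IHn, IHn0, chebM. ring.
Qed.

Lemma chebK n (x : R) : chebd (S n) 0 x ^ 2 - 2 * x * chebd n 0 x * chebd (S n) 0 x + chebd n 0 x ^ 2 = 1 - x^2.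
Proof.
  induction n.
  - simpl. ring.
  - rewrite (chebd_SS n 0). simpl INR. rewrite <- IHn. ring.
Qed.

Lemma chebG n (x : R) : x^2 <> 1 -> (INR n)^2 * chebd n 0 x ^ 2 + (1 - x^2) * chebd n 1 x ^ 2 = (INR n)^2.
Proof.
  intro Hx. destruct n as [|n]. { simpl. ring. }
  apply (Rmult_eq_reg_l (1 - x^2)); [|intro; apply Hx; lra].
  assert (E: (1 - x ^ 2) * (INR (S n) ^ 2 * chebd (S n) 0 x ^ 2 + (1 - x ^ 2) * chebd (S n) 1 x ^ 2)
     = INR (S n)^2 * ((1-x^2) * chebd (S n) 0 x ^ 2) + ((1 - x ^ 2) * chebd (S n) 1 x)^2) by ring.
  rewrite E, chebM.
  transitivity (INR (S n) ^ 2 * (chebd (S n) 0 x ^ 2 - 2 * x * chebd n 0 x * chebd (S n) 0 x + chebd n 0 x ^ 2)).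
  { ring. } rewrite chebK. ring.
Qed.


Definition ODE (D : nat -> R -> R) (c : R) (j : nat) (x : R) : Prop :=
  (1 - x^2) * D (S (S j)) x - (2 * INR j + 1) * x * D (S j) x + (c - INR j ^ 2) * D j x = 0.

Lemma loc_int (P : R -> Prop) (a b x : R) : a < x < b -> (forall y, a < y < b -> P y) -> locally x P.
Proof.
  intros Hx HP. apply (locally_interval P x a b); simpl; try lra.
  intros y H1 H2; apply HP; simpl in *; lra.
Qed.

Lemma zero_deriv (G : R -> R) (a b x l : R) : a < x < b -> (forall y, a < y < b -> G y = 0) ->
  is_derive G x l -> l = 0.
Proof.
  intros Hx HG Hd.
  assert (H0 : is_derive G x 0).
  { apply (is_derive_ext_loc (fun _ => 0)). apply (loc_int _ a b x Hx). intros y Hy; rewrite HG; auto.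
    apply D_const. }
  apply is_derive_unique in Hd. apply is_derive_unique in H0. rewrite <- Hd, <- H0. reflexivity.
Qed.

Lemma ode_step (D : nat -> R -> R) (c : R) (j : nat) (a b : R) :
  (forall x, a < x < b -> is_derive (D j) x (D (S j) x)) ->
  (forall x, a < x < b -> is_derive (D (S j)) x (D (S (S j)) x)) ->
  (forall x, a < x < b -> is_derive (D (S (S j))) x (D (S (S (S j))) x)) ->
  (forall x, a < x < b -> ODE D c j x) -> forall x, a < x < b -> ODE D c (S j) x.
Proof.
  intros H0 H1 H2 HO x Hx.
  set (G := fun y => (1 - y^2) * D (S (S j)) y - (2 * INR j + 1) * y * D (S j) y + (c - INR j ^ 2) * D j y).
  assert (HG : is_derive G x
     ((-2 * x) * D (S (S j)) x + (1 - x^2) * D (S (S (S j))) x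
      - (2 * INR j + 1) * (D (S j) x + x * D (S (S j)) x) + (c - INR j ^ 2) * D (S j) x)).
  { unfold G. apply D_plus; [apply D_minus|].
    - eapply D_ext; [intro; reflexivity| |apply D_mult; [|apply H2; auto]].
      2:{ apply D_minus; [apply D_const|]. eapply D_ext; [intro t; simpl; reflexivity| reflexivity|].
          apply D_mult; [apply D_id| apply D_mult; [apply D_id|apply D_const]]. }
      simpl. ring.
    - eapply D_ext; [intro; reflexivity| |apply D_mult; [apply D_mult; [apply D_const|apply D_id]|apply H1; auto]].
      simpl; ring.
    - eapply D_ext; [intro; reflexivity| |apply D_mult; [apply D_const|apply H0; auto]]. simpl; ring. }
  pose proof (zero_deriv G a b x _ Hx (fun y Hy => HO y Hy) HG) as Z.
  unfold ODE. rewrite S_INR. rewrite <- Z. ring.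
Qed.

Lemma chebODE n j (x : R) : ODE (chebd n) (INR n ^ 2) j x.
Proof.
  revert x. induction j; intro x.
  - unfold ODE. simpl INR. pose proof (chebL n x). lra.
  - apply (ode_step (chebd n) _ j (x-1) (x+1)); try (intros; apply chebd_der); auto; lra.
Qed.


Definition II (x : R) := -1 < x < 1.

Lemma boot (f : R -> R) (c : R) :
  (forall x, II x -> is_derive f x (Derive_n f 1 x)) ->
  (forall x, II x -> is_derive (Derive_n f 1) x (Derive_n f 2 x)) ->
  (forall x, II x -> ODE (Derive_n f) c 0 x) ->
  forall i, (forall x, II x -> is_derive (Derive_n f i) x (Derive_n f (S i) x)) /\
            (forall x, II x -> is_derive (Derive_n f (S i)) x (Derive_n f (S (S i)) x)) /\
            (forall x, II x -> ODE (Derive_n f) c i x).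
Proof.
  intros B0 B1 BO i. induction i as [|i [IH0 [IH1 IHO]]].
  - split; [|split]; auto.
  - assert (H2 : forall x, II x -> is_derive (Derive_n f (S (S i))) x (Derive_n f (S (S (S i))) x)).
    { intros x Hx.
      set (h := fun y => ((2 * INR i + 1) * y * Derive_n f (S i) y - (c - INR i ^ 2) * Derive_n f i y) / (1 - y^2)).
      assert (Hh : exists l, is_derive h x l).
      { eexists. unfold h. apply is_derive_div.
        - apply D_minus; apply D_mult.
          + apply D_mult; [apply D_const|apply D_id].
          + apply IH1; auto.
          + apply D_const.
          + apply IH0; auto.
        - apply D_minus; [apply D_const|]. eapply D_ext; [intro t; simpl; reflexivity|reflexivity|].
          apply D_mult; [apply D_id| apply D_mult; [apply D_id|apply D_const]].
        - red in Hx. nra. }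
      destruct Hh as [l Hl].
      assert (Hl' : is_derive (Derive_n f (S (S i))) x l).
      { apply (is_derive_ext_loc h). apply (loc_int _ (-1) 1 x Hx).
        intros y Hy. unfold h. pose proof (IHO y Hy) as O. unfold ODE in O.
        assert (1 - y^2 <> 0) by nra. change (h y = Derive_n f (S (S i)) y :> R). unfold h. field_simplify_eq; auto. lra. auto. }
      replace (Derive_n f (S (S (S i))) x) with l; auto.
      symmetry. apply is_derive_unique. auto. }
    split; [|split]; auto.
    apply (ode_step _ c i (-1) 1); auto.
Qed.


Lemma sq_pos x : II x -> 0 < sqrt (1 - x^2).
Proof. intro H. red in H. apply sqrt_lt_R0. nra. Qed.
Lemma sq_sq x : II x -> sqrt (1 - x^2) ^ 2 = 1 - x^2.
Proof. intro H. red in H. apply pow2_sqrt. nra. Qed.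

Lemma sq_der x : II x -> is_derive (fun t => sqrt (1 - t^2)) x (- x / sqrt (1 - x^2)).
Proof.
  intro H. eapply D_ext; [intro; reflexivity| |].
  2:{ apply (is_derive_sqrt (fun t => 1 - t^2)).
      - apply D_minus; [apply D_const|]. eapply D_ext; [intro t; simpl; reflexivity|reflexivity|].
        apply D_mult; [apply D_id| apply D_mult; [apply D_id|apply D_const]].
      - red in H; nra. }
  pose proof (sq_pos x H). cbv beta. field. lra.
Qed.

Lemma chebS_eq n x : chebS n x = / INR n * sqrt (1 - x^2) * chebd n 1 x.
Proof.
  unfold chebS. rewrite <- chebD_eq. reflexivity.
Qed.

Section S.
Variable n : nat.
Hypothesis Hn : (1 <= n)%nat.

Lemma INRn_pos : 0 < INR n.
Proof. apply lt_0_INR. lia. Qed.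

Lemma S1 x : II x -> is_derive (chebS n) x (- INR n * chebd n 0 x / sqrt (1 - x^2)).
Proof.
  intro Hx. pose proof (sq_pos x Hx) as Hs. pose proof (sq_sq x Hx) as Hs2. pose proof INRn_pos.
  eapply D_ext; [intro t; symmetry; apply chebS_eq| |].
  2:{ apply D_mult; [apply D_scal, sq_der; auto| apply chebd_der]. }
  pose proof (chebL n x) as L.
  cbv beta. apply (Rmult_eq_reg_l (sqrt (1 - x^2))); [|lra].
  field_simplify; try lra. rewrite Hs2. field_simplify_eq; [lra|lra].
Qed.

Lemma S1' x : II x -> Derive_n (chebS n) 1 x = - INR n * chebd n 0 x / sqrt (1 - x^2).
Proof. intro Hx. simpl. apply is_derive_unique. apply S1; auto. Qed.

Definition d2S (x : R) := ((- INR n * chebd n 1 x) * sqrt (1 - x^2) - (- INR n * chebd n 0 x) * (- x / sqrt (1 - x^2))) / (sqrt (1 - x^2))^2.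

Lemma S2 x : II x -> is_derive (Derive_n (chebS n) 1) x (d2S x).
Proof.
  intro Hx. apply (is_derive_ext_loc (fun y => - INR n * chebd n 0 y / sqrt (1 - y^2))).
  { apply (loc_int _ (-1) 1 x Hx). intros y Hy. symmetry. apply S1'. exact Hy. }
  unfold d2S. apply (is_derive_div (fun y => - INR n * chebd n 0 y) (fun y => sqrt (1 - y^2))).
  - apply D_scal, chebd_der.
  - apply sq_der; auto.
  - pose proof (sq_pos x Hx); lra.
Qed.

Lemma S2' x : II x -> Derive_n (chebS n) 2 x = d2S x.
Proof. intro Hx. change (Derive (Derive_n (chebS n) 1) x = d2S x). apply is_derive_unique, S2; auto. Qed.

Lemma SODE0 x : II x -> ODE (Derive_n (chebS n)) (INR n ^ 2) 0 x.
Proof.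
  intro Hx. unfold ODE. rewrite S2', S1' by auto. simpl Derive_n. rewrite chebS_eq.
  unfold d2S. pose proof (sq_pos x Hx) as Hs. pose proof (sq_sq x Hx) as Hs2. pose proof INRn_pos.
  assert (Hx2 : 1 - x^2 <> 0) by (red in Hx; nra).
  set (s := sqrt (1 - x^2)) in *.
  assert (E : forall k, s ^ (S (S k)) = s ^ k * (1 - x^2)).
  { intro k. rewrite <- Hs2. simpl. ring. }
  simpl INR. field_simplify_eq; try lra. rewrite ?E. ring.
Qed.

Lemma Schain i : (forall x, II x -> is_derive (Derive_n (chebS n) i) x (Derive_n (chebS n) (S i) x)) /\
            (forall x, II x -> is_derive (Derive_n (chebS n) (S i)) x (Derive_n (chebS n) (S (S i)) x)) /\
            (forall x, II x -> ODE (Derive_n (chebS n)) (INR n ^ 2) i x).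
Proof.
  apply boot.
  - intros x Hx. rewrite S1' by auto. apply S1; auto.
  - intros x Hx. rewrite S2' by auto. apply S2; auto.
  - apply SODE0.
Qed.
End S.


Lemma sumR_ext f g N : (forall m, (m < N)%nat -> f m = g m) -> sumR f N = sumR g N.
Proof. induction N; intro H; simpl; auto. rewrite IHN, H; auto. Qed.
Lemma sumR_shift f N : sumR f (S N) = f O + sumR (fun m => f (S m)) N.
Proof. induction N; simpl; [ring|]. simpl in IHN. rewrite IHN. ring. Qed.
Lemma sumR_plus f g N : sumR (fun m => f m + g m) N = sumR f N + sumR g N.
Proof. induction N; simpl; [ring|]. rewrite IHN. ring. Qed.
Lemma sumR_scal c f N : sumR (fun m => c * f m) N = c * sumR f N.
Proof. induction N; simpl; [ring|]. rewrite IHN. ring. Qed.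
Lemma sumR_der f df N (x : R) : (forall m, is_derive (f m) x (df m)) ->
  is_derive (fun y => sumR (fun m => f m y) N) x (sumR df N).
Proof.
  intro H. induction N; simpl.
  - apply D_const.
  - apply D_plus; auto.
Qed.

Lemma same_deriv (F G : R -> R) x a b : II x -> (forall y, II y -> F y = G y) ->
  is_derive F x a -> is_derive G x b -> a = b.
Proof.
  intros Hx H Ha Hb. apply (is_derive_ext_loc F G) in Ha.
  - apply is_derive_unique in Ha. apply is_derive_unique in Hb. rewrite <- Ha, <- Hb. reflexivity.
  - apply (loc_int _ (-1) 1 x Hx). intros; apply H; auto.
Qed.

Definition UU (x : R) := / (1 - x^2).

Lemma UU_der x : II x -> is_derive UU x (2 * x * UU x ^ 2).
Proof.
  intro Hx. assert (1 - x^2 <> 0) by (red in Hx; nra).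
  unfold UU. eapply D_ext; [intro; reflexivity| |].
  2:{ apply (is_derive_inv (fun t => 1 - t^2)); auto.
      apply D_minus; [apply D_const|]. eapply D_ext; [intro t; simpl; reflexivity|reflexivity|].
      apply D_mult; [apply D_id| apply D_mult; [apply D_id|apply D_const]]. }
  cbv beta. field. auto.
Qed.

Lemma UUp_der p x : II x -> is_derive (fun y => UU y ^ p) x (2 * INR p * x * UU x ^ (p + 1)).
Proof.
  intro Hx. eapply D_ext; [intro; reflexivity| |apply is_derive_pow, UU_der; auto].
  destruct p; [simpl; ring|]. replace (S p+1)%nat with (S (S p)) by lia. simpl pred. cbv beta. simpl. ring.
Qed.

Lemma UUp_der2 p x : II x -> is_derive (fun y => 2 * INR p * y * UU y ^ (p + 1)) x
   (2 * INR p * (UU x ^ (p + 1) + x * (2 * INR (p + 1) * x * UU x ^ (p + 2)))).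
Proof.
  intro Hx. eapply D_ext; [intro; reflexivity| |].
  2:{ apply D_mult; [apply D_mult; [apply D_const|apply D_id]|apply UUp_der; auto]. }
  replace (p + 1 + 1)%nat with (p + 2)%nat by lia. cbv beta. ring.
Qed.


Fixpoint ec (n j m : nat) : R :=
  match j with
  | O => match m with O => 1 | _ => 0 end
  | S j' => (match m with O => 0 | S m' => ec n j' m' * (INR (j' + m') * (2 * INR m' + 1)) end)
            + ec n j' m * (INR n ^ 2 - INR j' ^ 2 - 2 * INR m * INR (j' + m))
  end.

Lemma ec_S0 n j : ec n (S j) 0 = 0 + ec n j 0 * (INR n ^ 2 - INR j ^ 2 - 2 * INR 0 * INR (j + 0)).
Proof. reflexivity. Qed.
Lemma ec_SS n j m : ec n (S j) (S m) = ec n j m * (INR (j + m) * (2 * INR m + 1))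
            + ec n j (S m) * (INR n ^ 2 - INR j ^ 2 - 2 * INR (S m) * INR (j + S m)).
Proof. reflexivity. Qed.

Lemma ec_high n j m : (j < m)%nat -> ec n j m = 0.
Proof.
  revert m; induction j; intros m H; simpl.
  - destruct m; [lia|auto].
  - destruct m; [lia|]. rewrite IHj, IHj by lia. ring.
Qed.

Lemma sumR_comb f g h N a b c : a * sumR f N + b * sumR g N + c * sumR h N = sumR (fun m => a * f m + b * g m + c * h m) N.
Proof. induction N; simpl; [ring|]. rewrite <- IHN. ring. Qed.

Definition Phi (n j : nat) (x : R) := sumR (fun m => ec n j m * UU x ^ (j + m)) (S j).

Lemma reindex n j (V : R) :
  sumR (fun m => ec n j m * (INR (j+m) * (2 * INR m + 1) * V ^ (j + m + 2)
         + (INR n ^ 2 - INR j ^ 2 - 2 * INR m * INR (j + m)) * V ^ (j + m + 1))) (S j)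
  = sumR (fun m => ec n (S j) m * V ^ (S j + m)) (S (S j)).
Proof.
  set (A := fun m => ec n j m * (INR (j+m) * (2 * INR m + 1)) * V ^ (j + m + 2)).
  set (G := fun m => ec n j m * (INR n ^ 2 - INR j ^ 2 - 2 * INR m * INR (j + m)) * V ^ (j + m + 1)).
  assert (L : sumR (fun m => ec n j m * (INR (j+m) * (2 * INR m + 1) * V ^ (j + m + 2)
         + (INR n ^ 2 - INR j ^ 2 - 2 * INR m * INR (j + m)) * V ^ (j + m + 1))) (S j)
         = sumR A (S j) + sumR G (S j)).
  { rewrite <- sumR_plus. apply sumR_ext. intros. unfold A, G. ring. }
  assert (G2 : sumR G (S (S j)) = sumR G (S j)).
  { change (sumR G (S (S j))) with (sumR G (S j) + G (S j)). unfold G at 2.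
    rewrite ec_high by lia. ring. }
  assert (G3 : sumR G (S (S j)) = G O + sumR (fun m => G (S m)) (S j)) by apply sumR_shift.
  rewrite (sumR_shift (fun m => ec n (S j) m * V ^ (S j + m)) (S j)).
  assert (R1 : sumR (fun m => ec n (S j) (S m) * V ^ (S j + S m)) (S j) = sumR A (S j) + sumR (fun m => G (S m)) (S j)).
  { rewrite <- sumR_plus. apply sumR_ext. intros m _. unfold A, G. rewrite ec_SS.
    replace (S j + S m)%nat with (j + m + 2)%nat by lia.
    replace (j + S m + 1)%nat with (j + m + 2)%nat by lia. rewrite ?plus_INR, ?S_INR, ?plus_INR. ring. }
  rewrite R1, L. rewrite <- G2, G3. unfold G at 1. rewrite ec_S0.
  replace (S j + 0)%nat with (j + 0 + 1)%nat by lia. simpl INR. ring.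
Qed.

Lemma Phi_step n j x : II x ->
  sumR (fun m => ec n j m * (2 * INR (j+m) * (UU x ^ (j+m+1) + x * (2 * INR (j+m+1) * x * UU x ^ (j+m+2))))) (S j) / 2
  - ((2 * INR j + 1) * x * sumR (fun m => ec n j m * (2 * INR (j+m) * x * UU x ^ (j+m+1))) (S j) / 2
     - (INR n ^ 2 - INR j ^ 2) * Phi n j x) / (1 - x^2)
  = Phi n (S j) x.
Proof.
  intro Hx. assert (Hx2 : 1 - x^2 <> 0) by (red in Hx; nra).
  unfold Phi. rewrite <- reindex.
  set (S2 := sumR _ (S j)). set (S1 := sumR (fun m => ec n j m * (2 * INR (j+m) * x * UU x ^ (j+m+1))) (S j)).
  set (S0 := sumR (fun m => ec n j m * UU x ^ (j + m)) (S j)).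
  transitivity (/2 * S2 + (- (2 * INR j + 1) * x / (2 * (1 - x^2))) * S1 + ((INR n ^ 2 - INR j ^ 2) / (1 - x^2)) * S0).
  { field. auto. }
  unfold S2, S1, S0. rewrite sumR_comb. apply sumR_ext. intros m _.
  rewrite !pow_add. rewrite plus_INR. unfold UU. set (W := (/ (1 - x^2)) ^ j * (/ (1 - x^2)) ^ m).
  rewrite ?plus_INR. change (INR 1) with 1. field. auto.
Qed.


Section E.
Variable n : nat.
Hypothesis Hn : (1 <= n)%nat.

Definition vS j x := Derive_n (chebS n) j x.
Definition EE j x := chebd n j x ^ 2 + vS j x ^ 2.

Lemma vS_der j x : II x -> is_derive (vS j) x (vS (S j) x).
Proof. intro Hx. destruct (Schain n Hn j) as [H _]. apply H; auto. Qed.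
Lemma vS_ode j x : II x -> ODE vS (INR n ^ 2) j x.
Proof. intro Hx. destruct (Schain n Hn j) as [_ [_ H]]. apply H; auto. Qed.

Lemma sq_der' (f : R -> R) (x a : R) : is_derive f x a -> is_derive (fun y => f y ^ 2) x (2 * f x * a).
Proof. intro H. apply (D_ext (fun t => f t * f t) _ _ (a * f x + f x * a)); [intro t; simpl; ring| ring |apply D_mult; eauto]. Qed.

Lemma EE0 x : II x -> EE 0 x = 1.
Proof.
  intro Hx. unfold EE, vS. simpl Derive_n. rewrite chebS_eq.
  pose proof (INRn_pos n Hn). pose proof (sq_sq x Hx). 
  assert (x^2 <> 1) by (red in Hx; nra). pose proof (chebG n x H1).
  apply (Rmult_eq_reg_l (INR n ^ 2)); [|apply pow_nonzero; lra].
  rewrite <- H2 at 2. replace ((/ INR n * sqrt (1 - x ^ 2) * chebd n 1 x) ^ 2) with ((1-x^2) * chebd n 1 x ^ 2 / INR n ^ 2). field. lra. rewrite <- H0 at 1. field. lra.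
Qed.

Lemma EE_eq j x : II x -> EE j x = Phi n j x.
Proof.
  revert x. induction j as [|j IH]; intros x Hx.
  - rewrite EE0 by auto. unfold Phi. simpl. ring.
  - set (E1 := fun y => 2 * (chebd n j y * chebd n (S j) y + vS j y * vS (S j) y)).
    set (P1 := fun y => sumR (fun m => ec n j m * (2 * INR (j+m) * y * UU y ^ (j+m+1))) (S j)).
    assert (HE1 : forall y, II y -> is_derive (EE j) y (E1 y)).
    { intros y Hy. unfold EE, E1. eapply D_ext; [intro; reflexivity| |apply D_plus; apply sq_der'].
      2: apply chebd_der. 2: apply vS_der; auto. ring. }
    assert (HP1 : forall y, II y -> is_derive (Phi n j) y (P1 y)).
    { intros y Hy. unfold Phi, P1. apply (sumR_der (fun m y => ec n j m * UU y ^ (j+m))).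
      intro m. eapply D_ext; [intro; reflexivity| |apply D_scal, UUp_der; auto]. ring. }
    assert (EP1 : forall y, II y -> E1 y = P1 y).
    { intros y Hy. apply (same_deriv (EE j) (Phi n j) y); auto. }
    set (E2 := 2 * (chebd n (S j) x ^ 2 + chebd n j x * chebd n (S (S j)) x + vS (S j) x ^ 2 + vS j x * vS (S (S j)) x)).
    set (P2 := sumR (fun m => ec n j m * (2 * INR (j+m) * (UU x ^ (j+m+1) + x * (2 * INR (j+m+1) * x * UU x ^ (j+m+2))))) (S j)).
    assert (EP2 : E2 = P2).
    { apply (same_deriv E1 P1 x); auto.
      - unfold E1, E2. eapply D_ext; [intro; reflexivity| |].
        2:{ apply D_scal, D_plus; apply D_mult.
            apply (chebd_der n j). apply (chebd_der n (S j)). apply (vS_der j x Hx). apply (vS_der (S j) x Hx). }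
        ring.
      - unfold P1, P2. apply (sumR_der (fun m y => ec n j m * (2 * INR (j+m) * y * UU y ^ (j+m+1)))).
        intro m. apply D_scal. apply UUp_der2; auto. }
    rewrite <- Phi_step by auto. fold P2. rewrite <- EP2. 
    replace (sumR (fun m => ec n j m * (2 * INR (j+m) * x * UU x ^ (j+m+1))) (S j)) with (P1 x) by reflexivity.
    rewrite <- EP1, <- IH by auto.
    assert (Hx2 : 1 - x^2 <> 0) by (red in Hx; nra).
    pose proof (chebODE n j x) as O1. pose proof (vS_ode j x Hx) as O2. unfold ODE in O1, O2.
    assert (U2 : chebd n (S (S j)) x = ((2 * INR j + 1) * x * chebd n (S j) x - (INR n ^ 2 - INR j ^ 2) * chebd n j x) / (1 - x^2)).
    { field_simplify_eq; auto. lra. }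
    assert (V2 : vS (S (S j)) x = ((2 * INR j + 1) * x * vS (S j) x - (INR n ^ 2 - INR j ^ 2) * vS j x) / (1 - x^2)).
    { field_simplify_eq; auto. lra. }
    unfold E2, E1, EE. rewrite U2, V2. field. auto.
Qed.
End E.


Definition cm (m k : nat) : R := Binomial.C (k - 1 + m) (2 * m) * oddfact m ^ 2.

Lemma cmk_cm m k : cmk m k = cm m k.
Proof.
  destruct m.
  - unfold cm, cmk, Binomial.C, oddfact. simpl. replace (k - 1 + 0 - 0)%nat with (k - 1 + 0)%nat by lia.
    field. apply INR_fact_neq_0.
  - reflexivity.
Qed.

Lemma F_S k : INR (Factorial.fact (S k)) = INR (S k) * INR (Factorial.fact k).
Proof. rewrite fact_simpl, mult_INR. reflexivity. Qed.

Lemma oddfact_S m : oddfact (S m) = oddfact m * (2 * INR (S m) - 1).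
Proof. reflexivity. Qed.

Lemma c_ident (b a : nat) (N : R) :
  let j := (b + 2 + a)%nat in
  cm b j * (INR (j + b) * (2 * INR b + 1)) * (N - INR (S b) ^ 2)
  + cm (S b) j * (N - INR j ^ 2 - 2 * INR (S b) * INR (j + S b))
  = cm (S b) (S j) * (N - INR j ^ 2).
Proof.
  intro j. unfold cm, Binomial.C, j.
  replace (b + 2 + a - 1 + b)%nat with (a + 2 * b + 1)%nat by lia.
  replace (a + 2 * b + 1 - 2 * b)%nat with (S a) by lia.
  replace (b + 2 + a - 1 + S b)%nat with (S (a + 2 * b + 1)) by lia.
  replace (S (a + 2 * b + 1) - 2 * S b)%nat with a by lia.
  replace (S (b + 2 + a) - 1 + S b)%nat with (S (S (a + 2 * b + 1))) by lia.
  replace (S (S (a + 2 * b + 1)) - 2 * S b)%nat with (S a) by lia.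
  replace (2 * S b)%nat with (S (S (2 * b))) by lia.
  rewrite !F_S, oddfact_S.
  pose proof (INR_fact_neq_0 a). pose proof (INR_fact_neq_0 (2 * b)). pose proof (INR_fact_neq_0 (a + 2 * b + 1)).
  rewrite ?S_INR, ?plus_INR, ?mult_INR, ?S_INR, ?plus_INR. change (INR 0) with 0.
  assert (0 <= INR a) by apply pos_INR. assert (0 <= INR b) by apply pos_INR.
  field. repeat split; try lra.
Qed.

Definition Qp (n m : nat) : R := prodR1 (fun i => INR n ^ 2 - INR i ^ 2) m.

Lemma Qp_S n m : Qp n (S m) = Qp n m * (INR n ^ 2 - INR (S m) ^ 2).
Proof. reflexivity. Qed.

Lemma Qp_pos n m : (m < n)%nat -> 0 < Qp n m.
Proof.
  induction m; intro H; [unfold Qp; simpl; lra|].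
  rewrite Qp_S. apply Rmult_lt_0_compat; [apply IHm; lia|].
  assert (INR (S m) < INR n) by (apply lt_INR; lia). assert (0 <= INR (S m)) by apply pos_INR. nra.
Qed.

Lemma ec_diag n j : ec n (S j) (S j) = 0.
Proof.
  induction j.
  - simpl. ring.
  - rewrite ec_SS. rewrite IHj, ec_high by lia. ring.
Qed.

Lemma C_nn N : Binomial.C N N = 1.
Proof. unfold Binomial.C. rewrite Nat.sub_diag. simpl. field. apply INR_fact_neq_0. Qed.

Lemma cm0 k : cm 0 k = 1.
Proof. unfold cm, Binomial.C, oddfact. simpl. rewrite Nat.add_0_r, Nat.sub_0_r. field. apply INR_fact_neq_0. Qed.

Lemma ec_closed n j' : (S j' <= n)%nat -> forall m, (m < S j')%nat ->
  ec n (S j') m = INR n ^ 2 * cm m (S j') * Qp n j' / Qp n m.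
Proof.
  induction j' as [|j' IH]; intros Hj m Hm.
  - assert (m = 0%nat) by lia. subst. rewrite ec_S0. rewrite cm0. unfold Qp. simpl prodR1. change (ec n 0 0) with 1. simpl INR. unfold Rdiv. rewrite Rinv_1. ring.
  - destruct m as [|m'].
    + rewrite ec_S0. rewrite IH by lia. rewrite !cm0. rewrite Qp_S. 
      assert (0 < Qp n 0) by (apply Qp_pos; lia). rewrite Nat.add_0_r. change (INR 0) with 0. field. lra.
    + rewrite ec_SS. destruct (Nat.eq_dec m' j') as [E|E].
      * subst m'. rewrite ec_diag. rewrite IH by lia.
        assert (0 < Qp n j') by (apply Qp_pos; lia). assert (0 < Qp n (S j')) by (apply Qp_pos; lia).
        unfold cm. replace (S (S j') - 1 + S j')%nat with (2 * S j')%nat by lia.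
        replace (S j' - 1 + j')%nat with (2 * j')%nat by lia. rewrite !C_nn, oddfact_S.
        rewrite plus_INR, S_INR. field. split; lra.
      * rewrite !IH by lia.
        assert (0 < Qp n m') by (apply Qp_pos; lia). assert (0 < Qp n (S m')) by (apply Qp_pos; lia).
        assert (0 < Qp n j') by (apply Qp_pos; lia).
        pose proof (c_ident m' (j' - m' - 1) (INR n ^ 2)) as CI. cbv zeta in CI.
        replace (m' + 2 + (j' - m' - 1))%nat with (S j') in CI by lia.
        rewrite (Qp_S n j'), (Qp_S n m').
        assert (HN : INR n ^ 2 - INR (S m') ^ 2 > 0).
        { assert (INR (S m') < INR n) by (apply lt_INR; lia). assert (0 <= INR (S m')) by apply pos_INR. nra. }
        transitivity (INR n ^ 2 * Qp n j' / (Qp n m' * (INR n ^ 2 - INR (S m') ^ 2)) *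
          (cm m' (S j') * (INR (S j' + m') * (2 * INR m' + 1)) * (INR n ^ 2 - INR (S m') ^ 2) +
           cm (S m') (S j') * (INR n ^ 2 - INR (S j') ^ 2 - 2 * INR (S m') * INR (S j' + S m')))).
        { field. split; lra. }
        rewrite CI. field. split; lra.
Qed.


Lemma cheb1 n : chebd n 0 1 = 1.
Proof. induction n using pair_ind; [reflexivity|reflexivity|]. rewrite chebd_SS, IHn, IHn0. simpl INR. ring. Qed.

Lemma u_at1 n j : chebd n (S j) 1 * oddfact (S j) = INR n ^ 2 * Qp n j.
Proof.
  induction j.
  - pose proof (chebODE n 0 1) as O. unfold ODE in O. rewrite cheb1 in O. unfold oddfact, Qp. simpl in *. lra.
  - pose proof (chebODE n (S j) 1) as O. unfold ODE in O. rewrite Qp_S.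
    replace (INR n ^ 2 * (Qp n j * (INR n ^ 2 - INR (S j) ^ 2))) with ((INR n ^ 2 * Qp n j) * (INR n ^ 2 - INR (S j) ^ 2)) by ring.
    rewrite <- IHj, (oddfact_S (S j)).
    rewrite oddfact_S. rewrite !S_INR in *.
    assert (H : (2 * (INR j + 1 + 1) - 1) * chebd n (S (S j)) 1 = (INR n ^ 2 - (INR j + 1) ^ 2) * chebd n (S j) 1) by lra.
    transitivity (oddfact j * (2 * (INR j + 1) - 1) * ((2 * (INR j + 1 + 1) - 1) * chebd n (S (S j)) 1)); [ring|].
    rewrite H. ring.
Qed.

Lemma oddfact_pos m : 0 < oddfact m.
Proof.
  induction m; [unfold oddfact; simpl; lra|]. rewrite oddfact_S. apply Rmult_lt_0_compat; auto.
  rewrite S_INR. pose proof (pos_INR m). lra.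
Qed.

Lemma C_pos a b : 0 < Binomial.C a b.
Proof. unfold Binomial.C. pose proof (INR_fact_lt_0 a). pose proof (INR_fact_lt_0 b). pose proof (INR_fact_lt_0 (a - b)).
  apply Rdiv_lt_0_compat; auto. apply Rmult_lt_0_compat; auto. Qed.

Lemma cm_pos m k : 0 < cm m k.
Proof. unfold cm. apply Rmult_lt_0_compat; [apply C_pos|]. apply pow_lt, oddfact_pos. Qed.

Lemma ec_nonneg n k m : (k <= n)%nat -> (1 <= k)%nat -> 0 <= ec n k m.
Proof.
  intros H1 H2. destruct k as [|k']; [lia|].
  destruct (Compare_dec.lt_dec m (S k')).
  - rewrite ec_closed by lia. assert (0 < Qp n m) by (apply Qp_pos; lia). assert (0 < Qp n k') by (apply Qp_pos; lia).
    pose proof (cm_pos m (S k')). assert (0 < INR n) by (apply lt_0_INR; lia).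
    apply Rlt_le. apply Rdiv_lt_0_compat; auto. apply Rmult_lt_0_compat; auto. apply Rmult_lt_0_compat; auto. nra.
  - destruct (Nat.eq_dec m (S k')); [subst; rewrite ec_diag; lra|]. rewrite ec_high by lia. lra.
Qed.

Lemma ec0_pos n k : (k <= n)%nat -> (1 <= k)%nat -> 0 < ec n k 0.
Proof.
  intros H1 H2. destruct k as [|k']; [lia|].
  rewrite ec_closed by lia. assert (0 < Qp n 0) by (apply Qp_pos; lia). assert (0 < Qp n k') by (apply Qp_pos; lia).
  pose proof (cm_pos 0 (S k')). assert (0 < INR n) by (apply lt_0_INR; lia).
  apply Rdiv_lt_0_compat; auto. apply Rmult_lt_0_compat; auto. apply Rmult_lt_0_compat; auto. nra.
Qed.

Lemma powlt (V W : R) p : 0 <= V < W -> (1 <= p)%nat -> V ^ p < W ^ p.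
Proof.
  intros H Hp. induction p; [lia|]. destruct p. { simpl. lra. }
  simpl. simpl in IHp. assert (0 <= V * V ^ p) by (apply Rmult_le_pos; [lra|apply pow_le; lra]).
  assert (V * V^p < W * W^p) by (apply IHp; lia). nra.
Qed.

Lemma sumR_lt (a : nat -> R) (p : nat -> nat) (V W : R) N :
  (forall m, (1 <= p m)%nat) ->   (forall m, 0 <= a m) -> 0 < a O -> 0 < V < W ->
  sumR (fun m => a m * V ^ p m) (S N) < sumR (fun m => a m * W ^ p m) (S N).
Proof.
  intros Hp Ha H0 HVW. induction N.
  - simpl. apply Rplus_lt_compat_l. apply Rmult_lt_compat_l; auto. apply powlt; [lra|]. apply Hp.
  - change (sumR (fun m => a m * V ^ p m) (S (S N))) with (sumR (fun m => a m * V ^ p m) (S N) + a (S N) * V ^ p (S N)).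
    change (sumR (fun m => a m * W ^ p m) (S (S N))) with (sumR (fun m => a m * W ^ p m) (S N) + a (S N) * W ^ p (S N)).
    apply Rplus_lt_le_compat; auto. apply Rmult_le_compat_l; auto. apply pow_incr; lra.
Qed.


Lemma powfrac (a b : R) k m : b <> 0 ->
  (a ^ 2 / b ^ 2) ^ (k + m) = a ^ (2 * k) / b ^ (2 * k) * (a ^ (2 * m) / b ^ (2 * m)).
Proof.
  intro Hb. rewrite !pow_mult. unfold Rdiv. rewrite Rpow_mult_distr, !pow_add, ?pow_inv.
  field. split; apply pow_nonzero; apply pow_nonzero; auto.
Qed.

Section D.
Variables n k : nat.
Hypothesis Hk : (1 <= k)%nat.
Hypothesis Hkn : (k <= n)%nat.

Lemma INRn_pos' : 0 < INR n.
Proof. apply lt_0_INR. lia. Qed.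
Lemma INRk_pos : 0 < INR k.
Proof. apply lt_0_INR. lia. Qed.
Lemma kn_le : INR k <= INR n.
Proof. apply le_INR. lia. Qed.

Lemma xk_rad : 0 <= 1 - INR k ^ 2 / INR n ^ 2.
Proof.
  pose proof INRn_pos'. pose proof INRk_pos. pose proof kn_le.
  assert (INR k ^ 2 / INR n ^ 2 <= 1).
  { apply (Rmult_le_reg_r (INR n ^ 2)); [nra|]. field_simplify; nra. }
  lra.
Qed.

Lemma xk_sq : xk n k ^ 2 = 1 - INR k ^ 2 / INR n ^ 2.
Proof. unfold xk. apply pow2_sqrt, xk_rad. Qed.

Lemma xk_nonneg : 0 <= xk n k.
Proof. unfold xk. apply sqrt_pos. Qed.

Lemma xk_II : II (xk n k).
Proof.
  pose proof xk_sq. pose proof xk_nonneg. pose proof INRn_pos'. pose proof INRk_pos.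
  assert (0 < INR k ^ 2 / INR n ^ 2) by (apply Rdiv_lt_0_compat; nra).
  red. split; [lra|]. nra.
Qed.

Lemma UU_xk : UU (xk n k) = INR n ^ 2 / INR k ^ 2.
Proof.
  unfold UU. rewrite xk_sq. pose proof INRn_pos'. pose proof INRk_pos. field. repeat split; try lra. replace (INR n ^ 2 - (INR n ^ 2 - INR k ^ 2)) with (INR k ^ 2) by ring. apply pow_nonzero; lra.
Qed.

End D.
Lemma delta_id n k' : (S k' <= n)%nat -> EE n (S k') (xk n (S k')) = Ank n (S k') * Bnk n (S k') * chebd n (S k') 1 ^ 2.
Proof.
  intro Hkn. assert (Hk : (1 <= S k')%nat) by lia.
  rewrite (EE_eq n ltac:(lia) (S k') (xk n (S k')) (xk_II n (S k') Hk Hkn)).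
  pose proof (u_at1 n k') as U1. pose proof (oddfact_pos (S k')).
  assert (Hu : chebd n (S k') 1 = INR n ^ 2 * Qp n k' / oddfact (S k')) by (field_simplify_eq; lra).
  rewrite Hu. unfold Phi. rewrite (UU_xk n (S k') Hk Hkn).
  change (sumR (fun m => ec n (S k') m * (INR n ^ 2 / INR (S k') ^ 2) ^ (S k' + m)) (S (S k')))
    with (sumR (fun m => ec n (S k') m * (INR n ^ 2 / INR (S k') ^ 2) ^ (S k' + m)) (S k')
          + ec n (S k') (S k') * (INR n ^ 2 / INR (S k') ^ 2) ^ (S k' + S k')).
  rewrite ec_diag, Rmult_0_l, Rplus_0_r.
  unfold Ank, Bnk. replace (S k' - 1)%nat with k' by lia.
  fold (Qp n k'). 
  pose proof (INRn_pos' n (S k') Hk Hkn). pose proof (INRk_pos n (S k') Hk Hkn). assert (0 < Qp n k') by (apply Qp_pos; lia).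
  transitivity (INR n ^ (2 * S k') / INR (S k') ^ (2 * S k') * (INR n ^ 2 * Qp n k') *
     sumR (fun m => cmk m (S k') / INR (S k') ^ (2 * m) * (INR n ^ (2 * m) / Qp n m)) (S k')).
  2:{ change (prodR1 (fun j : nat => INR n ^ 2 - INR j ^ 2)) with (Qp n).
      set (SS := sumR _ (S k')). assert (0 < INR n ^ (2 * S k')) by (apply pow_lt; lra).
      assert (0 < INR (S k') ^ (2 * S k')) by (apply pow_lt; lra).
      set (A := INR n ^ (2 * S k')) in *. set (B := INR (S k') ^ (2 * S k')) in *.
      field. repeat split; try lra. }
  rewrite <- sumR_scal. apply sumR_ext. intros m Hm.
  rewrite ec_closed by lia. rewrite cmk_cm. rewrite powfrac by lra.
  assert (0 < Qp n m) by (apply Qp_pos; lia).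
  field. repeat split; try lra; apply pow_nonzero; lra.
Qed.


Lemma fact_ratio n k' : (S k' <= n)%nat ->
  INR (Factorial.fact (n + S k')) = INR (Factorial.fact (n - S k')) * INR (n + S k') * INR n * Qp n k'.
Proof.
  induction k'; intro H.
  - unfold Qp. simpl prodR1. destruct n as [|n']; [lia|].
    replace (S n' + 1)%nat with (S (S n')) by lia. replace (S n' - 1)%nat with n' by lia.
    rewrite !F_S. ring.
  - replace (n + S (S k'))%nat with (S (n + S k')) by lia. rewrite F_S, IHk' by lia.
    replace (n - S k')%nat with (S (n - S (S k'))) by lia. rewrite F_S, Qp_S.
    replace (S (n - S (S k'))) with (n - S k')%nat by lia.
    rewrite minus_INR by lia. rewrite !plus_INR, !S_INR. ring.
Qed.

Lemma B_formula n k : (1 <= k)%nat -> (k <= n)%nat ->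
  Bnk n k = (INR (n + k) / INR n) *
            ((INR n) ^ (2 * k) * INR (Factorial.fact (n - k)) / INR (Factorial.fact (n + k))).
Proof.
  intros H1 H2. destruct k as [|k']; [lia|].
  rewrite fact_ratio by lia. unfold Bnk. replace (S k' - 1)%nat with k' by lia. fold (Qp n k').
  assert (0 < INR n) by (apply lt_0_INR; lia). assert (0 < Qp n k') by (apply Qp_pos; lia).
  assert (0 < INR (n + S k')) by (apply lt_0_INR; lia). pose proof (INR_fact_lt_0 (n - S k')).
  set (A := INR n ^ (2 * S k')). field. repeat split; lra.
Qed.

Lemma ratio_mono n k m : (m < k)%nat -> (k <= n)%nat ->
  INR n ^ (2 * m) / Qp n m <= INR k ^ (2 * m) / Qp k m.
Proof.
  intros Hm Hkn. induction m.
  - unfold Qp. simpl. lra.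
  - replace (2 * S m)%nat with (2 * m + 2)%nat by lia. rewrite !pow_add, !Qp_S.
    assert (0 < Qp n m) by (apply Qp_pos; lia). assert (0 < Qp k m) by (apply Qp_pos; lia).
    assert (INR (S m) < INR k) by (apply lt_INR; lia). assert (INR k <= INR n) by (apply le_INR; lia).
    assert (0 < INR (S m)) by (apply lt_0_INR; lia).
    assert (R1 : INR n ^ 2 / (INR n ^ 2 - INR (S m) ^ 2) <= INR k ^ 2 / (INR k ^ 2 - INR (S m) ^ 2)).
    { assert (Pn : 0 < INR n ^ 2 - INR (S m) ^ 2) by nra. assert (Pk : 0 < INR k ^ 2 - INR (S m) ^ 2) by nra.
      apply (Rmult_le_reg_r ((INR n ^ 2 - INR (S m) ^ 2) * (INR k ^ 2 - INR (S m) ^ 2))); [nra|].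
      field_simplify; try lra.
      assert (INR k ^ 2 <= INR n ^ 2) by (pose proof (pos_INR k); nra).
      assert (INR (S m) ^ 2 * INR k ^ 2 <= INR (S m) ^ 2 * INR n ^ 2) by (apply Rmult_le_compat_l; [apply pow2_ge_0|auto]).
      lra. }
    assert (R0 : 0 <= INR n ^ (2 * m) / Qp n m) by (apply Rlt_le, Rdiv_lt_0_compat; [apply pow_lt; lra|lra]).
    assert (R2 : 0 <= INR n ^ 2 / (INR n ^ 2 - INR (S m) ^ 2)) by (apply Rlt_le, Rdiv_lt_0_compat; nra).
    specialize (IHm ltac:(lia)).
    transitivity (INR n ^ (2 * m) / Qp n m * (INR n ^ 2 / (INR n ^ 2 - INR (S m) ^ 2))).
    { right. assert (0 < INR n ^ 2 - INR (S m) ^ 2) by nra. set (A := INR n ^ (2 * m)). field. lra. }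
    transitivity (INR k ^ (2 * m) / Qp k m * (INR k ^ 2 / (INR k ^ 2 - INR (S m) ^ 2))).
    { apply Rmult_le_compat; auto. }
    right. assert (0 < INR k ^ 2 - INR (S m) ^ 2) by nra. set (A := INR k ^ (2 * m)). field. lra.
Qed.

Lemma sumR_le f g N : (forall m, (m < N)%nat -> f m <= g m) -> sumR f N <= sumR g N.
Proof. induction N; intro H; simpl; [lra|]. apply Rplus_le_compat; auto. Qed.

Lemma A_mono n k : (1 <= k)%nat -> (k <= n)%nat -> Ank n k <= Ank k k.
Proof.
  intros H1 H2. unfold Ank. apply Rmult_le_compat_l.
  { apply Rlt_le, Rdiv_lt_0_compat; [apply pow_lt, oddfact_pos| apply pow_lt, lt_0_INR; lia]. }
  apply sumR_le. intros m Hm. apply Rmult_le_compat_l.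
  { rewrite cmk_cm. apply Rlt_le, Rdiv_lt_0_compat; [apply cm_pos| apply pow_lt, lt_0_INR; lia]. }
  apply (ratio_mono n k m); auto.
Qed.


Lemma isd_cont (f : R -> R) x l : is_derive f x l -> continuity_pt f x.
Proof. intro H. apply derivable_continuous_pt. exists l. apply is_derive_Reals. exact H. Qed.

Lemma MVT_open (f df : R -> R) (a b : R) : a < b ->
  (forall c, a < c < b -> is_derive f c (df c)) ->
  (forall c, a <= c <= b -> continuity_pt f c) ->
  exists c, a < c < b /\ f b - f a = df c * (b - a).
Proof.
  intros Hab Hd Hc.
  set (pr1 := fun c (H : a < c < b) => exist (fun l => derivable_pt_abs f c l) (df c) (proj1 (is_derive_Reals _ _ _) (Hd c H))).
  set (pr2 := fun c (H : a < c < b) => derivable_pt_id c).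
  destruct (MVT f id a b pr1 pr2 Hab Hc) as [c [P E]].
  { intros; apply derivable_continuous, derivable_id. }
  exists c. split; auto. unfold id in E.
  rewrite (derive_pt_eq_0 f c (df c) (pr1 c P)) in E by (apply is_derive_Reals; apply Hd; auto).
  unfold pr2 in E. rewrite derive_pt_id in E. lra.
Qed.

Lemma chebd_nn_const n x y : chebd n n x = chebd n n y.
Proof.
  induction n using pair_ind; [reflexivity|reflexivity|].
  rewrite !chebd_SS. rewrite !(chebd_high (S n) (S (S n))), !(chebd_high n (S (S n))) by lia. rewrite IHn0. ring.
Qed.

Lemma chebd_odd0 n j p : (n + j = 2 * p + 1)%nat -> chebd n j 0 = 0.
Proof.
  intro H. pose proof (chebd_par n j 0) as P. rewrite Ropp_0, H in P.
  rewrite pow_add, pow_mult in P. replace ((-1)^2) with 1 in P by ring. rewrite pow1 in P. lra.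
Qed.

Lemma vS_zero n : (1 <= n)%nat -> vS n n 0 = 0.
Proof.
  intro Hn. assert (I0 : II 0) by (red; lra).
  assert (Rec : forall j, vS n (S (S j)) 0 = - (INR n ^ 2 - INR j ^ 2) * vS n j 0).
  { intro j. pose proof (vS_ode n Hn j 0 I0) as O. unfold ODE in O. lra. }
  destruct (Nat.Even_or_Odd n) as [[q Hq]|[q Hq]].
  - assert (forall i, vS n (2 * i) 0 = 0).
    { induction i.
      - unfold vS. simpl Derive_n. rewrite chebS_eq. rewrite (chebd_odd0 n 1 q) by lia. ring.
      - replace (2 * S i)%nat with (S (S (2 * i))) by lia. rewrite Rec, IHi. ring. }
    rewrite Hq at 2. auto.
  - assert (forall i, vS n (2 * i + 1) 0 = 0).
    { induction i.
      - unfold vS. simpl (2 * 0 + 1)%nat. rewrite S1' by auto. rewrite (chebd_odd0 n 0 q) by lia. unfold Rdiv. ring.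
      - replace (2 * S i + 1)%nat with (S (S (2 * i + 1))) by lia. rewrite Rec, IHi. ring. }
    rewrite Hq at 2. auto.
Qed.

Lemma xk_nn k : (1 <= k)%nat -> xk k k = 0.
Proof.
  intro H. unfold xk. assert (0 < INR k) by (apply lt_0_INR; lia).
  replace (1 - INR k ^ 2 / INR k ^ 2) with 0 by (field; lra). apply sqrt_0.
Qed.

Lemma ABkk k : (1 <= k)%nat -> Ank k k * Bnk k k = 1.
Proof.
  intro H. destruct k as [|k']; [lia|].
  pose proof (delta_id (S k') k' ltac:(lia)) as D.
  rewrite xk_nn in D by lia. unfold EE in D. rewrite vS_zero in D by lia.
  rewrite (chebd_nn_const (S k') 0 1) in D.
  pose proof (u_at1 (S k') k') as U. pose proof (oddfact_pos (S k')).
  assert (0 < Qp (S k') k') by (apply Qp_pos; lia). assert (0 < INR (S k')) by (apply lt_0_INR; lia).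
  assert (Hu : chebd (S k') (S k') 1 <> 0).
  { intro E. rewrite E in U. assert (0 < INR (S k') ^ 2 * Qp (S k') k') by (apply Rmult_lt_0_compat; [apply pow_lt|]; lra). lra. }
  assert (0 < chebd (S k') (S k') 1 ^ 2).
  { destruct (Rlt_or_le 0 (chebd (S k') (S k') 1)). apply pow_lt; lra.
    replace (chebd (S k') (S k') 1 ^ 2) with ((- chebd (S k') (S k') 1) ^ 2) by ring. apply pow_lt. lra. }
  apply (Rmult_eq_reg_r (chebd (S k') (S k') 1 ^ 2)); [|lra]. lra.
Qed.

Lemma A_bound n k : (1 <= k)%nat -> (k <= n)%nat ->
  Ank n k <= / 2 * (INR (Factorial.fact (2 * k)) / (INR k) ^ (2 * k)).
Proof.
  intros H1 H2. eapply Rle_trans; [apply A_mono; eauto|].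
  pose proof (ABkk k H1) as AB. rewrite (B_formula k k H1 (le_n k)) in AB.
  rewrite Nat.sub_diag in AB. simpl (Factorial.fact 0) in AB.
  replace (k + k)%nat with (2 * k)%nat in AB by lia.
  assert (0 < INR k) by (apply lt_0_INR; lia). pose proof (INR_fact_lt_0 (2 * k)).
  assert (0 < INR k ^ (2 * k)) by (apply pow_lt; lra).
  rewrite mult_INR in AB. simpl (INR 2) in AB. simpl (INR 1) in AB.
  set (F := INR (Factorial.fact (2 * k))) in *. set (P := INR k ^ (2 * k)) in *.
  right. assert (E : (1 + 1) * INR k / INR k * (P * 1 / F) = 2 * P / F) by (field; split; lra).
  rewrite E in AB. apply (Rmult_eq_reg_r (2 * P / F)). 2:{ apply Rgt_not_eq, Rlt_gt, Rdiv_lt_0_compat; lra. }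
  rewrite AB. field. split; lra.
Qed.


Lemma chebd_cont n j x : continuity_pt (chebd n j) x.
Proof. apply (isd_cont _ _ _ (chebd_der n j x)). Qed.

Lemma cont_sqk (F : R -> R) k c : -1 <= c <= 1 -> continuity_pt F c ->
  continuity_pt (fun x => sqrt (1 - x^2) ^ k * F x) c.
Proof.
  intros Hc HF.
  apply (continuity_pt_mult (fun x => sqrt (1 - x^2) ^ k) F); auto.
  apply (continuity_pt_comp (fun x => sqrt (1 - x^2)) (fun u => u ^ k)).
  - apply (continuity_pt_comp (fun x => 1 - x^2) sqrt).
    + apply derivable_continuous_pt. exists (-2 * c). apply is_derive_Reals.
      eapply D_ext; [intro; reflexivity| |apply D_minus; [apply D_const|]].
      2:{ eapply D_ext; [intro t; simpl; reflexivity|reflexivity|].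
          apply D_mult; [apply D_id| apply D_mult; [apply D_id|apply D_const]]. }
      cbv beta. ring.
    + apply continuity_pt_sqrt. nra.
  - apply derivable_continuous_pt, derivable_pt_pow.
Qed.

Lemma at1_pos n j : (j <= n)%nat -> 0 < chebd n j 1.
Proof.
  intro H. destruct j as [|j'].
  - rewrite cheb1. lra.
  - pose proof (u_at1 n j') as U. pose proof (oddfact_pos (S j')).
    assert (0 < Qp n j') by (apply Qp_pos; lia). assert (0 < INR n) by (apply lt_0_INR; lia).
    assert (0 < INR n ^ 2 * Qp n j') by (apply Rmult_lt_0_compat; [apply pow_lt|]; lra).
    destruct (Rlt_or_le 0 (chebd n (S j') 1)); auto. nra.
Qed.

Lemma pos_ge1 n i : (i <= n)%nat -> forall x, 1 <= x -> 0 < chebd n (n - i) x.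
Proof.
  induction i; intros Hi x Hx.
  - rewrite Nat.sub_0_r. rewrite (chebd_nn_const n x 1). apply at1_pos; lia.
  - pose proof (at1_pos n (n - S i) ltac:(lia)).
    destruct (Req_dec x 1) as [E|E]; [subst; auto|].
    destruct (MVT_open (chebd n (n - S i)) (chebd n (S (n - S i))) 1 x) as [c [Hc Ec]].
    + lra.
    + intros; apply chebd_der.
    + intros; apply chebd_cont.
    + replace (S (n - S i)) with (n - i)%nat in Ec by lia.
      assert (0 < chebd n (n - i) c) by (apply IHi; lia || lra).
      assert (0 < chebd n (n - i) c * (x - 1)) by (apply Rmult_lt_0_compat; lra). lra.
Qed.

Section Tau.
Variables (n k : nat) (w : R).
Hypothesis Hk : (1 <= k)%nat.
Hypothesis Hkn : (k + 2 <= n)%nat.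
Hypothesis Hw0 : chebd n (S k) w = 0.
Hypothesis Hwr : forall y, chebd n (S k) y = 0 -> y <= w.

Lemma w_nonneg : 0 <= w.
Proof.
  assert (chebd n (S k) (-w) = 0) by (rewrite chebd_par, Hw0; ring).
  apply Hwr in H. lra.
Qed.

Lemma y_pos_ge1 x : 1 <= x -> 0 < chebd n (S k) x.
Proof. intro Hx. replace (S k) with (n - (n - S k))%nat by lia. apply pos_ge1; auto; lia. Qed.

Lemma w_lt1 : w < 1.
Proof. destruct (Rlt_or_le w 1); auto. pose proof (y_pos_ge1 w H). lra. Qed.

Lemma y_pos_right t : w < t -> 0 < chebd n (S k) t.
Proof.
  intro Ht. destruct (Rlt_or_le 0 (chebd n (S k) t)) as [P|P]; auto. exfalso.
  destruct (Req_dec (chebd n (S k) t) 0) as [E|E]. { apply Hwr in E. lra. }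
  assert (t < 1). { destruct (Rlt_or_le t 1); auto. pose proof (y_pos_ge1 t H). lra. }
  destruct (IVT (chebd n (S k)) t 1) as [z [Hz Ez]].
  - intro; apply chebd_cont.
  - auto.
  - lra.
  - apply y_pos_ge1; lra.
  - apply Hwr in Ez. lra.
Qed.

Definition sq (x : R) := sqrt (1 - x^2).
Definition gg (x : R) := (1 - x^2) * chebd n (S (S k)) x - (INR k + 1) * x * chebd n (S k) x.
Definition phi (x : R) := sq x ^ k * gg x.
Definition hh (x : R) := sq x ^ (S k) * chebd n (S k) x.

Definition dgg (x : R) := -2 * x * chebd n (S (S k)) x + (1 - x^2) * chebd n (S (S (S k))) x
   - (INR k + 1) * (chebd n (S k) x + x * chebd n (S (S k)) x).

Lemma gg_der x : is_derive gg x (dgg x).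
Proof.
  unfold gg, dgg. apply D_minus.
  - eapply D_ext; [intro; reflexivity| |apply D_mult; [|apply chebd_der]].
    2:{ apply D_minus; [apply D_const|]. eapply D_ext; [intro t; simpl; reflexivity|reflexivity|].
        apply D_mult; [apply D_id| apply D_mult; [apply D_id|apply D_const]]. }
    cbv beta. ring.
  - eapply D_ext; [intro; reflexivity| |apply D_mult; [apply D_mult; [apply D_const|apply D_id]|apply chebd_der]].
    cbv beta. ring.
Qed.

Lemma sqk_der m x : II x -> is_derive (fun t => sq t ^ m) x (INR m * (- x / sq x) * sq x ^ pred m).
Proof. intro Hx. apply is_derive_pow. apply sq_der; auto. Qed.

Definition dphi (x : R) := INR k * (- x / sq x) * sq x ^ pred k * gg x + sq x ^ k * dgg x.
Definition dhh (x : R) := INR (S k) * (- x / sq x) * sq x ^ k * chebd n (S k) x + sq x ^ (S k) * chebd n (S (S k)) x.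

Lemma phi_der x : II x -> is_derive phi x (dphi x).
Proof. intro Hx. unfold phi, dphi. apply D_mult; [apply sqk_der; auto| apply gg_der]. Qed.
Lemma hh_der x : II x -> is_derive hh x (dhh x).
Proof. intro Hx. unfold hh, dhh. eapply D_ext; [intro; reflexivity| |apply D_mult; [apply sqk_der; auto| apply chebd_der]]. simpl pred. cbv beta. ring. Qed.

Lemma sq_pow_pos m x : II x -> 0 < sq x ^ m.
Proof. intro Hx. apply pow_lt. apply sq_pos; auto. Qed.

Lemma dphi_form x : II x ->
  dphi x = sq x ^ pred k / sq x * chebd n (S k) x * (INR k * (INR k + 1) - INR n ^ 2 * (1 - x^2)).
Proof.
  intro Hx. pose proof (sq_pos x Hx) as Hs. pose proof (sq_sq x Hx) as Hs2. fold (sq x) in Hs, Hs2.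
  pose proof (chebODE n (S k) x) as O. unfold ODE in O.
  assert (E : sq x ^ k = sq x ^ pred k * sq x) by (destruct k; [lia|]; simpl; ring).
  unfold dphi, dgg, gg. rewrite E.
  assert (Y3 : (1 - x^2) * chebd n (S (S (S k))) x = (2 * INR (S k) + 1) * x * chebd n (S (S k)) x - (INR n ^ 2 - INR (S k) ^ 2) * chebd n (S k) x) by lra.
  transitivity (sq x ^ pred k / sq x * (- INR k * x * ((1 - x ^ 2) * chebd n (S (S k)) x - (INR k + 1) * x * chebd n (S k) x)
     + sq x ^ 2 * (-2 * x * chebd n (S (S k)) x + ((1 - x ^ 2) * chebd n (S (S (S k))) x) - (INR k + 1) * (chebd n (S k) x + x * chebd n (S (S k)) x)))).
  { field. lra. }
  rewrite Y3, Hs2, S_INR. field. lra.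
Qed.

Lemma dhh_form x : II x -> dhh x = sq x ^ k / sq x * gg x.
Proof.
  intro Hx. pose proof (sq_pos x Hx) as Hs. pose proof (sq_sq x Hx) as Hs2. fold (sq x) in Hs, Hs2.
  unfold dhh, gg. rewrite S_INR. 
  transitivity (sq x ^ k / sq x * (- (INR k + 1) * x * chebd n (S k) x + sq x ^ 2 * chebd n (S (S k)) x)).
  { simpl. field. lra. }
  rewrite Hs2. field. lra.
Qed.

Lemma sq1 : sq 1 = 0.
Proof. unfold sq. replace (1 - 1^2) with 0 by ring. apply sqrt_0. Qed.

Lemma w_lt_xk : w < xk n k.
Proof.
  destruct (Rlt_or_le w (xk n k)) as [L|L]; auto. exfalso.
  pose proof w_nonneg as W0. pose proof w_lt1 as W1.
  assert (Hkn' : (k <= n)%nat) by lia.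
  pose proof (xk_sq n k Hk Hkn') as X2. pose proof (xk_nonneg n k) as X0.
  assert (Hnp : 0 < INR n) by (apply lt_0_INR; lia). assert (Hkp : 0 < INR k) by (apply lt_0_INR; lia).
  assert (DP : forall c, w < c < 1 -> 0 < dphi c).
  { intros c Hc. assert (IIc : II c) by (red; lra). rewrite dphi_form by auto.
    pose proof (y_pos_right c ltac:(lra)). pose proof (sq_pos c IIc). pose proof (sq_pow_pos (pred k) c IIc).
    assert (B : INR n ^ 2 * (1 - c^2) < INR k * (INR k + 1)).
    { assert (c^2 > xk n k ^ 2) by nra. rewrite X2 in H2.
      assert (INR n ^ 2 * (1 - c^2) < INR k ^ 2).
      { assert (1 - c^2 < INR k ^ 2 / INR n ^ 2) by lra.
        apply (Rmult_lt_compat_l (INR n ^ 2)) in H3; [|nra]. field_simplify in H3; lra. }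
      nra. }
    apply Rmult_lt_0_compat; [|lra]. apply Rmult_lt_0_compat; auto. apply Rdiv_lt_0_compat; auto. }
  assert (CP : forall c, w <= c <= 1 -> continuity_pt phi c).
  { intros c Hc. unfold phi, sq. apply cont_sqk; [lra|].
    apply derivable_continuous_pt. exists (dgg c). apply is_derive_Reals, gg_der. }
  assert (CH : forall c, w <= c <= 1 -> continuity_pt hh c).
  { intros c Hc. unfold hh, sq. apply cont_sqk; [lra|]. apply chebd_cont. }
  assert (G : forall t, w <= t < 1 -> gg t < 0).
  { intros t Ht. destruct (MVT_open phi dphi t 1) as [c [Hc Ec]].
    - lra.
    - intros c Hc; apply phi_der; red; lra.
    - intros c Hc; apply CP; lra.
    - assert (phi 1 = 0) by (unfold phi; rewrite sq1; destruct k; [lia|]; simpl; ring).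
      assert (0 < dphi c) by (apply DP; lra).
      assert (phi t < 0) by nra.
      unfold phi in H1. pose proof (sq_pow_pos k t ltac:(red; lra)).
      destruct (Rlt_or_le (gg t) 0); auto. nra. }
  set (t0 := (w + 1) / 2).
  destruct (MVT_open hh dhh w t0) as [c [Hc Ec]].
  - unfold t0; lra.
  - intros c Hc; apply hh_der; red; unfold t0 in Hc; lra.
  - intros c Hc; apply CH; unfold t0 in Hc; lra.
  - assert (IIc : II c) by (red; unfold t0 in Hc; lra).
    rewrite dhh_form in Ec by auto.
    assert (gg c < 0) by (apply G; unfold t0 in Hc; lra).
    assert (0 < sq c ^ k / sq c) by (apply Rdiv_lt_0_compat; [apply sq_pow_pos| apply sq_pos]; auto).
    assert (hh w = 0) by (unfold hh; rewrite Hw0; ring).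
    assert (0 < hh t0).
    { unfold hh. apply Rmult_lt_0_compat; [apply sq_pow_pos; red; unfold t0; lra|]. apply y_pos_right. unfold t0; lra. }
    assert (sq c ^ k / sq c * gg c < 0) by nra.
    assert (t0 - w > 0) by (unfold t0; lra). nra.
Qed.
End Tau.


Lemma delta_sq n k : (1 <= k)%nat -> (k <= n)%nat -> delta n k ^ 2 = EE n k (xk n k) / chebd n k 1 ^ 2.
Proof.
  intros H1 H2. unfold delta, chebDD. rewrite !chebD_eq.
  change (chebd n k (xk n k) ^ 2 + Derive_n (chebS n) k (xk n k) ^ 2) with (EE n k (xk n k)).
  pose proof (at1_pos n k H2). unfold Rdiv. rewrite Rpow_mult_distr, pow2_sqrt.
  - rewrite pow_inv. reflexivity.
  - unfold EE. pose proof (pow2_ge_0 (chebd n k (xk n k))). pose proof (pow2_ge_0 (vS n k (xk n k))). lra.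
Qed.

Theorem lemma4p4 (n k : nat) (w : R) :
  (1 <= k)%nat -> (k + 2 <= n)%nat -> is_rightmost_zero n k w ->
  (tau n k w) ^ 2 < (delta n k) ^ 2 /\
  (delta n k) ^ 2 = Ank n k * Bnk n k /\
  Ank n k <= / 2 * (INR (Factorial.fact (2 * k)) / (INR k) ^ (2 * k)) /\
  Bnk n k = (INR (n + k) / INR n) *
            ((INR n) ^ (2 * k) * INR (Factorial.fact (n - k)) / INR (Factorial.fact (n + k))).
Proof.
  intros Hk Hkn [Hw0 Hwr].
  assert (Hkn' : (k <= n)%nat) by lia.
  rewrite chebD_eq in Hw0.
  assert (Hwr' : forall y, chebd n (S k) y = 0 -> y <= w) by (intros y Hy; apply Hwr; rewrite chebD_eq; auto).
  pose proof (at1_pos n k Hkn') as U1.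
  assert (U2 : 0 < chebd n k 1 ^ 2) by (apply pow_lt; lra).
  split; [|split; [|split]].
  - rewrite delta_sq by auto. unfold tau. rewrite !chebD_eq.
    unfold Rdiv. rewrite Rpow_mult_distr, pow2_abs, pow_inv. apply Rmult_lt_compat_r; [apply Rinv_0_lt_compat; lra|].
    pose proof (w_nonneg n k w Hw0 Hwr') as W0.
    pose proof (w_lt_xk n k w Hk Hkn Hw0 Hwr') as W1.
    pose proof (xk_II n k Hk Hkn') as XI. red in XI.
    assert (IIw : II w) by (red; lra).
    assert (Hn1 : (1 <= n)%nat) by lia.
    apply Rle_lt_trans with (EE n k w).
    { unfold EE. pose proof (pow2_ge_0 (vS n k w)). lra. }
    rewrite (EE_eq n Hn1 k w IIw), (EE_eq n Hn1 k (xk n k) (xk_II n k Hk Hkn')).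
    unfold Phi. apply (sumR_lt (ec n k) (fun m => (k + m)%nat)).
    + intros; lia.
    + intros; apply ec_nonneg; auto.
    + apply ec0_pos; auto.
    + unfold UU. assert (w ^ 2 < xk n k ^ 2) by nra.
      assert (1 - xk n k ^ 2 > 0) by (assert ((1 - xk n k) * (1 + xk n k) > 0) by (apply Rmult_lt_0_compat; lra); nra).
      split.
      * apply Rinv_0_lt_compat. lra.
      * apply Rinv_lt_contravar; [apply Rmult_lt_0_compat|]; lra.
  - rewrite delta_sq by auto. destruct k as [|k']; [lia|]. rewrite delta_id by lia. field. lra.
  - apply A_bound; auto.
  - apply B_formula; auto.
Qed.
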